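(* Fix an agent $k$ and a neighbor $\ell$ that are paired at time $i$. Let $\delta_k\in(0,1)$, $r_k\in(0,1)$, $c_k>0$, $\theta_{k\ell}(i)\in[0,1]$, $\theta_{\ell k}(i)\in(0,1]$, and let $A_0,A_1$ be real numbers; set $b_k(i)\triangleq A_0-A_1$ and $\gamma_k(i)\triangleq b_k(i)/c_k$. For each candidate action $a\in\{0,1\}$ of agent $k$ at time $i$, define agent $k$'s forecast of its own future reputation by $\theta^a(i)=\theta_{k\ell}(i)$ and $\theta^a(t+1)=r_k\theta^a(t)+(1-r_k)a$ for $t\ge i$ (i.e., agent $k$ is forecast to repeat action $a$ at all future times $t\ge i$), and define the long-term discounted cost $$J(a)\triangleq\sum_{t=i}^{\infty}\delta_k^{t-i}\Big[\big(1-\theta^a(t)\theta_{\ell k}(i)\big)A_0+\theta^a(t)\theta_{\ell k}(i)A_1+a\,c_k\Big].$$ Agent $k$'s best response is $a_{k\ell}(i)=1$ if $J(1)<J(0)$ and $a_{k\ell}(i)=0$ otherwise. Then $$a_{k\ell}(i)=\begin{cases}1,&\text{if }\gamma_k(i)=\dfrac{b_k(i)}{c_k}>\dfrac{\chi_k}{\theta_{\ell k}(i)},\\[2mm]0,&\text{otherwise,}\end{cases}\qquad\text{where }\chi_k\triangleq\frac{1-\delta_k r_k}{\delta_k(1-r_k)}.$$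
   Context: Setting: agents estimate a common vector; at time $i$ paired agents $k,\ell$ each decide whether to share ($a=1$, costing the sharer $c_k>0$) or not ($a=0$). $A_0$ (resp. $A_1$) is agent $k$'s expected next-step mean-square estimation cost, conditioned on its current estimate, when agent $\ell$ does not share (resp. shares) its intermediate estimate; $b_k(i)=A_0-A_1$ is the benefit to $k$ of $\ell$'s sharing. Reputation scores $\theta_{\ell k}$ (kept by $k$ about $\ell$) and $\theta_{k\ell}$ (kept by $\ell$ about $k$) are updated when paired by $\theta\leftarrow r\theta+(1-r)\cdot(\text{action})$. Agent $k$ believes that $\ell$ shares at time $t$ with probability $B(a_{\ell k}(t)=1)=\theta_{k\ell}(t)\theta_{\ell k}(t)$. Bounded rationality (the paper's Assumptions 1 and 2): when choosing its action at time $i$, agent $k$ assumes that its estimate, the pairing with $\ell$, and the score $\theta_{\ell k}$ remain at their time-$i$ values for all $t\ge i$, and that both agents repeat their time-$i$ actions in the future; the cost $J(a)$ above is the resulting expected long-term discounted cost $\sum_{t\ge i}\delta_k^{t-i}\mathbb{E}[J^{\rm act}_k(a_{\ell k}(t))+a_{k\ell}(t)c_k]$, with the expectation over $a_{\ell k}(t)$ taken under the belief. *)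

(* Defs.v *)
From Stdlib Require Import Reals.
From Coquelicot Require Import Coquelicot.
Open Scope R_scope.

Definition act (a : bool) : R := if a then 1 else 0.

(* Forecast of agent k's own reputation, indexed by n = t - i:
   theta^a(i) = th0, theta^a(t+1) = r theta^a(t) + (1-r) a. *)
Fixpoint theta_fc (r th0 : R) (a : bool) (n : nat) : R :=
  match n with
  | O => th0
  | S m => r * theta_fc r th0 a m + (1 - r) * act a
  end.

(* Long-term discounted cost J(a), summation index n = t - i. *)
Definition Jcost (delta r c th_kl th_lk A0 A1 : R) (a : bool) : R :=
  Series (fun n => delta ^ n *
    ((1 - theta_fc r th_kl a n * th_lk) * A0
     + theta_fc r th_kl a n * th_lk * A1 + act a * c)).

Definition best_response (delta r c th_kl th_lk A0 A1 : R) : bool :=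
  if Rlt_dec (Jcost delta r c th_kl th_lk A0 A1 true)
             (Jcost delta r c th_kl th_lk A0 A1 false)
  then true else false.

Definition chi (delta r : R) : R := (1 - delta * r) / (delta * (1 - r)).

(* Main.v *)
Require Import Defs.
From Stdlib Require Import Reals Lra.
From Coquelicot Require Import Coquelicot.
Open Scope R_scope.

Lemma geo2 (d s p q : R) : Rabs d < 1 -> Rabs s < 1 ->
  is_series (fun n => p * d ^ n + q * s ^ n) (p * / (1 - d) + q * / (1 - s)).
Proof.
  intros Hd Hs.
  apply (is_series_plus (fun n => p * d ^ n) (fun n => q * s ^ n)).
  - apply (is_series_scal p (fun n => d ^ n)). now apply is_series_geom.
  - apply (is_series_scal q (fun n => s ^ n)). now apply is_series_geom.
Qed.

Lemma th_true r th n : theta_fc r th true n = 1 - r ^ n * (1 - th).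
Proof. induction n; simpl; [ring| rewrite IHn; unfold act; ring]. Qed.
Lemma th_false r th n : theta_fc r th false n = r ^ n * th.
Proof. induction n; simpl; [ring| rewrite IHn; unfold act; ring]. Qed.

Theorem lemma1 (delta r c th_kl th_lk A0 A1 : R) :
  0 < delta < 1 -> 0 < r < 1 -> 0 < c ->
  0 <= th_kl <= 1 -> 0 < th_lk <= 1 ->
  best_response delta r c th_kl th_lk A0 A1 =
    (if Rlt_dec (chi delta r / th_lk) ((A0 - A1) / c) then true else false).
Proof.
  intros Hd Hr Hc Hkl Hlk.
  assert (Hd1 : Rabs delta < 1) by (rewrite Rabs_pos_eq; lra).
  assert (Hdr : 0 < delta * r < delta) by (split; nra).
  assert (Hs1 : Rabs (delta * r) < 1) by (rewrite Rabs_pos_eq; lra).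
  set (b := A0 - A1).
  assert (E1 : Jcost delta r c th_kl th_lk A0 A1 true =
     (A0 - th_lk * b + c) * / (1 - delta) + (th_lk * b * (1 - th_kl)) * / (1 - delta * r)).
  { unfold Jcost. apply is_series_unique.
    eapply is_series_ext; [|apply geo2; eauto].
    intro n; simpl. rewrite th_true, Rpow_mult_distr. unfold b, act. ring. }
  assert (E0 : Jcost delta r c th_kl th_lk A0 A1 false =
     A0 * / (1 - delta) + (- th_kl * th_lk * b) * / (1 - delta * r)).
  { unfold Jcost. apply is_series_unique.
    eapply is_series_ext; [|apply geo2; eauto].
    intro n; simpl. rewrite th_false, Rpow_mult_distr. unfold b, act. ring. }
  unfold best_response. rewrite E1, E0. fold b.
  assert (K : (A0 - th_lk * b + c) * / (1 - delta) + th_lk * b * (1 - th_kl) * / (1 - delta * r)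
    - (A0 * / (1 - delta) + - th_kl * th_lk * b * / (1 - delta * r))
    = (c * (1 - delta * r) - th_lk * b * delta * (1 - r)) / ((1 - delta) * (1 - delta * r))).
  { field; lra. }
  assert (P : 0 < (1 - delta) * (1 - delta * r)) by (apply Rmult_lt_0_compat; lra).
  assert (K2 : chi delta r / th_lk < b / c <->
     c * (1 - delta * r) < th_lk * b * delta * (1 - r)).
  { unfold chi.
    assert (Q : 0 < delta * (1 - r) * th_lk) by (apply Rmult_lt_0_compat; [apply Rmult_lt_0_compat|]; lra).
    replace ((1 - delta * r) / (delta * (1 - r)) / th_lk) with ((1 - delta * r) / (delta * (1 - r) * th_lk)) by (field; lra).
    split; intro H.
    - apply Rmult_lt_compat_r with (r := c * (delta * (1 - r) * th_lk)) in H; [|nra].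
      replace ((1 - delta * r) / (delta * (1 - r) * th_lk) * (c * (delta * (1 - r) * th_lk))) with (c * (1 - delta * r)) in H by (field; lra).
      replace (b / c * (c * (delta * (1 - r) * th_lk))) with (th_lk * b * delta * (1 - r)) in H by (field; lra).
      exact H.
    - apply Rmult_lt_reg_r with (r := c * (delta * (1 - r) * th_lk)); [nra|].
      replace ((1 - delta * r) / (delta * (1 - r) * th_lk) * (c * (delta * (1 - r) * th_lk))) with (c * (1 - delta * r)) by (field; lra).
      replace (b / c * (c * (delta * (1 - r) * th_lk))) with (th_lk * b * delta * (1 - r)) by (field; lra).
      exact H. }
  destruct (Rlt_dec _ _) as [H1|H1]; destruct (Rlt_dec (chi delta r / th_lk) (b / c)) as [H2|H2]; auto.
  - exfalso. apply H2, K2.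
    assert (X : (c * (1 - delta * r) - th_lk * b * delta * (1 - r)) / ((1 - delta) * (1 - delta * r)) < 0) by lra.
    unfold Rdiv in X.
    destruct (Rlt_or_le (c * (1 - delta * r)) (th_lk * b * delta * (1 - r))); auto.
    exfalso. assert (0 <= (c * (1 - delta * r) - th_lk * b * delta * (1 - r)) * / ((1 - delta) * (1 - delta * r))).
    { apply Rmult_le_pos; [lra| left; apply Rinv_0_lt_compat; lra]. } lra.
  - exfalso. apply H1. apply K2 in H2.
    assert ((c * (1 - delta * r) - th_lk * b * delta * (1 - r)) / ((1 - delta) * (1 - delta * r)) < 0).
    { unfold Rdiv. apply Rmult_neg_pos; [lra| apply Rinv_0_lt_compat; lra]. }
    lra.
Qed.
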